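(* Let $\Omega_1,\Omega_2\subset\mathbb{R}^n$ be nearly convex sets and $\varepsilon\geq 0$. If $\mathrm{ri}\,\Omega_1\cap\mathrm{ri}\,\Omega_2\neq \emptyset$, then for each $\bar x\in \Omega_1\cap\Omega_2$, $$N_\varepsilon(\bar x; \Omega_1\cap\Omega_2)=\bigcup_{\substack{\varepsilon_1\geq 0,\ \varepsilon_2\geq 0,\\ \varepsilon_1+\varepsilon_2=\varepsilon}}\big[N_{\varepsilon_1} (\bar x; \Omega_1)+N_{\varepsilon_2} (\bar x; \Omega_2)\big].$$
   Context: A set $D$ is nearly convex if there is a convex $E$ with $E\subset D\subset\overline{E}$. $\mathrm{ri}\,D=\{a\in D\mid\exists\delta>0,\ B(a;\delta)\cap\mathrm{aff}\,D\subset D\}$. For nonempty $\Omega\subset\mathbb{R}^n$, $\bar x\in\Omega$ and $\varepsilon\ge0$, the $\varepsilon$-normal set is $N_\varepsilon(\bar x;\Omega)=\{\xi\in\mathbb{R}^n\mid\langle\xi,x-\bar x\rangle\le\varepsilon\ \forall x\in\Omega\}$. Sums of sets are Minkowski sums. *)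

(* Defs.v *)
(* R^n is modelled as row vectors 'rV[R]_n over R : realType,
   with the Euclidean inner product and Euclidean distance. *)
From HB Require Import structures.
From mathcomp Require Import all_boot all_order all_algebra.
From mathcomp Require Import boolp classical_sets reals.
Set Implicit Arguments. Unset Strict Implicit. Unset Printing Implicit Defensive.
Import Order.TTheory GRing.Theory Num.Theory.
Local Open Scope ring_scope.
Local Open Scope classical_set_scope.

Section Defs.
Variables (R : realType) (n : nat).
Notation V := 'rV[R]_n.

Definition dotp (u v : V) : R := \sum_(i < n) u ord0 i * v ord0 i.

Definition sqdist (x y : V) : R := dotp (x - y) (x - y).

Definition ball_e (a : V) (d : R) : set V := [set x | sqdist x a < d ^+ 2 /\ 0 < d].

Definition convex_set (E : set V) : Prop :=
  forall x y t, E x -> E y -> 0 <= t <= 1 -> E (t *: x + (1 - t) *: y).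

Definition closure_e (E : set V) : set V :=
  [set x | forall d, 0 < d -> exists2 y, E y & sqdist x y < d ^+ 2].

Definition nearly_convex (D : set V) : Prop :=
  exists E : set V, convex_set E /\ E `<=` D /\ D `<=` closure_e E.

Definition aff (D : set V) : set V :=
  [set x | exists (k : nat) (p : 'I_k -> V) (w : 'I_k -> R),
      (forall i, D (p i)) /\ \sum_(i < k) w i = 1 /\ x = \sum_(i < k) w i *: p i].

Definition ri (D : set V) : set V :=
  [set a | D a /\ exists d, 0 < d /\ ball_e a d `&` aff D `<=` D].

Definition eps_normal (eps : R) (xbar : V) (Om : set V) : set V :=
  [set xi | forall x, Om x -> dotp xi (x - xbar) <= eps].

Definition msum (A B : set V) : set V :=
  [set z | exists a b, A a /\ B b /\ z = a + b].

End Defs.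

(* Main.v *)
Require Import Defs.
From HB Require Import structures.
From mathcomp Require Import all_boot all_order all_algebra.
From mathcomp Require Import boolp classical_sets reals.
From mathcomp Require Import ring lra.
Import Order.TTheory GRing.Theory Num.Theory.
Local Open Scope ring_scope.
Local Open Scope classical_set_scope.


Section Basics.
Context {R : realType} {n : nat}.
Notation V := 'rV[R]_n.
Implicit Types u v w : V.

Lemma dotpC u v : dotp u v = dotp v u.
Proof. by rewrite /dotp; apply: eq_bigr => i _; rewrite mulrC. Qed.

Lemma dotpDr u v w : dotp u (v + w) = dotp u v + dotp u w.
Proof. by rewrite /dotp -big_split; apply: eq_bigr => i _; rewrite mxE mulrDr. Qed.

Lemma dotpZr a u v : dotp u (a *: v) = a * dotp u v.
Proof. by rewrite /dotp mulr_sumr; apply: eq_bigr => i _; rewrite mxE mulrCA. Qed.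

Lemma dotpDl u v w : dotp (v + w) u = dotp v u + dotp w u.
Proof. by rewrite dotpC dotpDr !(dotpC u). Qed.

Lemma dotpZl a u v : dotp (a *: v) u = a * dotp v u.
Proof. by rewrite dotpC dotpZr dotpC. Qed.

Lemma dotpNr u v : dotp u (- v) = - dotp u v.
Proof. by rewrite -scaleN1r dotpZr mulN1r. Qed.
Lemma dotpNl u v : dotp (- v) u = - dotp v u.
Proof. by rewrite -scaleN1r dotpZl mulN1r. Qed.
Lemma dotpBr u v w : dotp u (v - w) = dotp u v - dotp u w.
Proof. by rewrite dotpDr dotpNr. Qed.
Lemma dotpBl u v w : dotp (v - w) u = dotp v u - dotp w u.
Proof. by rewrite dotpDl dotpNl. Qed.
Lemma dotp0r u : dotp u 0 = 0.
Proof. by rewrite -(scale0r 0) dotpZr mul0r. Qed.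
Lemma dotp0l u : dotp 0 u = 0.
Proof. by rewrite dotpC dotp0r. Qed.

Lemma dotpp_ge0 u : 0 <= dotp u u.
Proof. by apply: sumr_ge0 => i _; rewrite -expr2 sqr_ge0. Qed.

Lemma dotpp_eq0 u : dotp u u = 0 -> u = 0.
Proof.
move=> /eqP; rewrite /dotp psumr_eq0 => [/allP H|i _]; last by rewrite -expr2 sqr_ge0.
apply/rowP => i; rewrite mxE; apply/eqP.
by have := H i (mem_index_enum _); rewrite -expr2 sqrf_eq0.
Qed.

Lemma dotpp_gt0 u : u != 0 -> 0 < dotp u u.
Proof.
move=> u0; rewrite lt_neqAle dotpp_ge0 andbT eq_sym; apply/eqP => /dotpp_eq0.
by move/eqP: u0.
Qed.

Lemma CS u v : dotp u v ^+ 2 <= dotp u u * dotp v v.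
Proof.
have [->|v0] := eqVneq v 0; first by rewrite !dotp0r expr0n /= mulr0.
have h := dotpp_ge0 (dotp v v *: u - dotp u v *: v).
rewrite !(dotpBl, dotpBr, dotpZl, dotpZr) (dotpC v u) in h.
have hv := @dotpp_gt0 v v0.
have : 0 <= dotp v v * (dotp u u * dotp v v - dotp u v ^+ 2) by
  move: h; congr (_ <= _); ring.
by rewrite pmulr_rge0 // subr_ge0.
Qed.

End Basics.

Section Norm.
Context {R : realType} {n : nat}.
Notation V := 'rV[R]_n.
Implicit Types u v w : V.

Definition nrm u : R := Num.sqrt (dotp u u).

Lemma nrm_ge0 u : 0 <= nrm u.
Proof. exact: sqrtr_ge0. Qed.

Lemma nrm_sq u : nrm u ^+ 2 = dotp u u.
Proof. by rewrite sqr_sqrtr // dotpp_ge0. Qed.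

Lemma sqdist_nrm x y : sqdist x y = nrm (x - y) ^+ 2.
Proof. by rewrite nrm_sq. Qed.

Lemma dotp_abs u v : `|dotp u v| <= nrm u * nrm v.
Proof.
have h := CS u v; rewrite -!nrm_sq -exprMn in h.
rewrite -sqrtr_sqr -[X in _ <= X]ger0_norm ?mulr_ge0 ?nrm_ge0 // -sqrtr_sqr.
exact: ler_wsqrtr.
Qed.

Lemma dotp_le u v : dotp u v <= nrm u * nrm v.
Proof. exact: le_trans (ler_norm _) (dotp_abs u v). Qed.

Lemma nrmD u v : nrm (u + v) <= nrm u + nrm v.
Proof.
have h : nrm (u + v) ^+ 2 <= (nrm u + nrm v) ^+ 2.
  rewrite nrm_sq !(dotpDl, dotpDr) (dotpC v u).
  have := dotp_le u v; rewrite sqrrD -!nrm_sq; lra.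
have := nrm_ge0 (u + v); have := nrm_ge0 u; have := nrm_ge0 v; nra.
Qed.

Lemma nrmZ a u : nrm (a *: u) = `|a| * nrm u.
Proof.
by rewrite /nrm dotpZl dotpZr mulrA -expr2 sqrtrM ?sqr_ge0 // sqrtr_sqr.
Qed.

Lemma nrmN u : nrm (- u) = nrm u.
Proof. by rewrite -scaleN1r nrmZ normrN normr1 mul1r. Qed.

Lemma nrmB u v : nrm (u - v) = nrm (v - u).
Proof. by rewrite -nrmN opprB. Qed.

Lemma nrm0 : nrm (0 : V) = 0.
Proof. by rewrite /nrm dotp0r sqrtr0. Qed.

Lemma nrm_eq0 u : nrm u = 0 -> u = 0.
Proof. by move=> h; apply: dotpp_eq0; rewrite -nrm_sq h expr0n. Qed.

Lemma sq_lt_iff (a d : R) : 0 <= a -> 0 < d -> (a ^+ 2 < d ^+ 2) <-> (a < d).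
Proof. move=> ha hd; split => h; nra. Qed.

Lemma closureP (E : set V) x : closure_e E x <->
  (forall d, 0 < d -> exists2 y, E y & nrm (x - y) < d).
Proof.
split => h d d0; have [y Ey hy] := h d d0; exists y => //.
  by move: hy; rewrite sqdist_nrm sq_lt_iff // nrm_ge0.
by rewrite sqdist_nrm sq_lt_iff // nrm_ge0.
Qed.

Lemma ballP a d x : ball_e a d x <-> (nrm (x - a) < d /\ 0 < d).
Proof.
rewrite /ball_e /=; split => -[h1 h2]; split => //.
  by move: h1; rewrite sqdist_nrm sq_lt_iff // nrm_ge0.
by rewrite sqdist_nrm sq_lt_iff // nrm_ge0.
Qed.

Lemma closure_le (E : set V) b c x :
  (forall e, E e -> dotp b e <= c) -> closure_e E x -> dotp b x <= c.
Proof.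
move=> hE /closureP hx; rewrite leNgt; apply/negP => hlt.
set del := dotp b x - c.
have d0 : 0 < del / (1 + nrm b).
  by apply: divr_gt0; [rewrite subr_gt0 | have := nrm_ge0 b; lra].
have [e Ee he] := hx _ d0.
have h1 := hE e Ee.
have h2 := dotp_abs b (x - e); rewrite dotpBr in h2.
have hb := nrm_ge0 b.
have h3 : nrm b * nrm (x - e) <= nrm b * (del / (1 + nrm b)).
  by apply: ler_wpM2l => //; apply: ltW.
have h4 : nrm b * (del / (1 + nrm b)) < del.
  rewrite mulrA ltr_pdivrMr; last lra.
  have : 0 < del by rewrite subr_gt0.
  nra.
move: h2; rewrite ler_norml => /andP[_ h5].
have hdel : del = dotp b x - c by [].
lra.
Qed.

End Norm.

Section HB.
Context {R : realType} {n : nat}.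
Notation V := 'rV[R]_n.
Implicit Types u v w z : V.

Lemma dotp_delta u (k : 'I_n) : dotp u (delta_mx 0 k) = u ord0 k.
Proof.
rewrite /dotp (bigD1 k) //= big1 ?addr0; first by rewrite mxE eqxx /= mulr1.
by move=> j /negbTE hj; rewrite mxE hj andbF mulr0.
Qed.

Lemma coordD z1 z2 (j : 'I_n) : (z1 + z2) ord0 j = z1 ord0 j + z2 ord0 j.
Proof. by rewrite mxE. Qed.
Lemma coordZ a z (j : 'I_n) : (a *: z) ord0 j = a * z ord0 j.
Proof. by rewrite mxE. Qed.
Lemma coordN z (j : 'I_n) : (- z) ord0 j = - z ord0 j.
Proof. by rewrite mxE. Qed.

Definition supp (k : nat) z := forall j : 'I_n, (k <= j)%N -> z ord0 j = 0.

Variable M : V -> R -> Prop.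
Hypothesis hM1 : forall {z1 r1 z2 r2}, M z1 r1 -> M z2 r2 -> M (z1 + z2) (r1 + r2).
Hypothesis hM2 : forall {t z r}, 0 < t -> M z r -> M (t *: z) (t * r).
Hypothesis hM3 : forall r, M 0 r -> 0 <= r.
Hypothesis hM4 : forall {z r}, M z r -> exists s r', 0 < s /\ M (- (s *: z)) r'.

Lemma HB_step (k : 'I_n) a :
  (forall z r, M z r -> supp k z -> dotp a z <= r) ->
  exists a', forall z r, M z r -> supp k.+1 z -> dotp a' z <= r.
Proof.
move=> IH.
pose e : V := delta_mx 0 k.
pose wz z := z - z ord0 k *: e.
have ek : forall j : 'I_n, e ord0 j = (j == k)%:R.
  by move=> j; rewrite mxE eqxx /= eq_sym.
have suppw : forall z, supp k.+1 z -> supp k (wz z).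
  move=> z hz j hj; rewrite /wz coordD coordN coordZ ek.
  have [->|hjk] := eqVneq j k; first by rewrite mulr1 subrr.
  rewrite mulr0 subr0; apply: hz; rewrite ltn_neqAle hj andbT.
  by apply: contra hjk => /eqP h; apply/eqP/val_inj.
have dotw : forall u z, dotp u z = dotp u (wz z) + z ord0 k * u ord0 k.
  by move=> u z; rewrite /wz dotpBr dotpZr dotp_delta; ring.
pose Lo := [set x | exists z r, [/\ M z r, supp k.+1 z, z ord0 k < 0 &
                     x = (dotp a (wz z) - r) / (- z ord0 k)]].
pose Up := [set x | exists z r, [/\ M z r, supp k.+1 z, 0 < z ord0 k &
                     x = (r - dotp a (wz z)) / z ord0 k]].
have LoUp : forall x y, Lo x -> Up y -> x <= y.
  move=> x y [z2 [r2 [M2 s2 t2 ->]]] [z1 [r1 [M1 s1 t1 ->]]].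
  set T1 := z1 ord0 k in t1 *; set T2 := z2 ord0 k in t2 *.
  have t2' : 0 < - T2 by rewrite oppr_gt0.
  have MZ := hM1 (hM2 t2' M1) (hM2 t1 M2).
  have sZ : supp k ((- T2) *: z1 + T1 *: z2).
    move=> j hj; rewrite coordD !coordZ.
    have [->|hjk] := eqVneq j k; first by rewrite -/T1 -/T2; ring.
    have hj' : (k.+1 <= j)%N.
      rewrite ltn_neqAle hj andbT; apply: contra hjk => /eqP h; apply/eqP/val_inj.
      by rewrite /= h.
    by rewrite s1 // s2 // !mulr0 addr0.
  have := IH _ _ MZ sZ.
  rewrite dotpDr !dotpZr (dotw a z1) (dotw a z2) -/T1 -/T2.
  set A1 := dotp a (wz z1); set A2 := dotp a (wz z2) => hle.
  have p0 : 0 < T1 * - T2 by apply: mulr_gt0 => //; rewrite oppr_gt0.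
  rewrite -(ler_pM2r p0).
  have -> : (A2 - r2) / - T2 * (T1 * - T2) = T1 * (A2 - r2).
    by field; rewrite lt_eqF.
  have -> : (r1 - A1) / T1 * (T1 * - T2) = - T2 * (r1 - A1).
    by field; rewrite gt_eqF.
  lra.
have [[x0 Lox0]|Lo0] := pselect (Lo !=set0).
- have Upne : Up !=set0.
    case: Lox0 => z [r [Mz sz tz _]].
    have [s [r' [s0 Ms]]] := hM4 Mz.
    exists ((r' - dotp a (wz (- (s *: z)))) / (- (s *: z)) ord0 k).
    exists (- (s *: z)), r'; split => //.
      by move=> j hj; rewrite coordN coordZ sz // mulr0 oppr0.
    by rewrite coordN coordZ oppr_gt0 pmulr_rlt0.
  case: Upne => y0 Uy0.
  have hsup : has_ubound Lo by exists y0 => x Lx; exact: LoUp.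
  pose c := sup Lo.
  exists (a + (c - a ord0 k) *: e) => z r Mz sz.
  rewrite (dotw _ z) dotpDl dotpZl.
  have -> : dotp e (wz z) = 0 by rewrite dotpC dotp_delta; exact: suppw.
  rewrite coordD coordZ ek eqxx mulr1 mulr0 addr0.
  have -> : a ord0 k + (c - a ord0 k) = c by ring.
  have [hz|hz|hz] := ltgtP (z ord0 k) 0.
  + have Lx : Lo ((dotp a (wz z) - r) / (- z ord0 k)) by exists z, r.
    have := ub_le_sup hsup Lx; rewrite -/c.
    rewrite ler_pdivrMr ?oppr_gt0 //; nra.
  + have Uy : Up ((r - dotp a (wz z)) / z ord0 k) by exists z, r.
    have : c <= (r - dotp a (wz z)) / z ord0 k.
      by apply: ge_sup; [exists x0 | move=> x Lx; exact: LoUp].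
    rewrite ler_pdivlMr //; nra.
  + rewrite hz mul0r addr0.
    have -> : wz z = z by rewrite /wz hz scale0r subr0.
    apply: IH => // j hj; rewrite /supp in sz.
    have [->|hjk] := eqVneq j k; first by [].
    apply: sz; rewrite ltn_neqAle hj andbT; apply: contra hjk => /eqP h.
    by apply/eqP/val_inj.
- have Up0 : ~ (Up !=set0).
    case=> y [z [r [Mz sz tz _]]]; apply: Lo0.
    have [s [r' [s0 Ms]]] := hM4 Mz.
    exists ((dotp a (wz (- (s *: z))) - r') / (- (- (s *: z)) ord0 k)).
    exists (- (s *: z)), r'; split => //.
      by move=> j hj; rewrite coordN coordZ sz // mulr0 oppr0.
    by rewrite coordN coordZ oppr_lt0 mulr_gt0.
  exists a => z r Mz sz.
  have [hz|hz|hz] := ltgtP (z ord0 k) 0.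
  + exfalso; apply: Lo0.
    by exists ((dotp a (wz z) - r) / (- z ord0 k)), z, r.
  + exfalso; apply: Up0.
    by exists ((r - dotp a (wz z)) / z ord0 k), z, r.
  + apply: IH => // j hj.
    have [->|hjk] := eqVneq j k; first by [].
    apply: sz; rewrite ltn_neqAle hj andbT; apply: contra hjk => /eqP h.
    by apply/eqP/val_inj.
Qed.

Lemma HB_cone : exists a, forall z r, M z r -> dotp a z <= r.
Proof.
suff : forall k, exists a, forall z r, M z r -> supp k z -> dotp a z <= r.
  case/(_ n) => a ha; exists a => z r Mz; apply: ha => // j hj.
  by have := ltn_ord j; rewrite ltnNge hj.
elim=> [|k [a ha]].
  exists 0 => z r Mz sz.
  have z0 : z = 0 by apply/rowP => j; rewrite mxE; exact: sz.
  by rewrite z0 dotp0l; apply: hM3; rewrite -z0.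
have [kn|kn] := ltnP k n.
  exact: (@HB_step (Ordinal kn) a ha).
exists a => z r Mz sz; apply: ha => // j hj.
by have := ltn_ord j; rewrite ltnNge (leq_trans kn hj).
Qed.

End HB.

Section Proj.
Context {R : realType} {n : nat}.
Notation V := 'rV[R]_n.
Implicit Types u v w x y z : V.

Definition proj u x : V := x - (dotp u x / dotp u u) *: u.

Lemma projD u x y : proj u (x + y) = proj u x + proj u y.
Proof. by rewrite /proj dotpDr mulrDl scalerDl opprD addrACA. Qed.

Lemma projZ u a x : proj u (a *: x) = a *: proj u x.
Proof. by rewrite /proj dotpZr scalerBr scalerA mulrA. Qed.

Lemma projN u x : proj u (- x) = - proj u x.
Proof. by rewrite -scaleN1r projZ scaleN1r. Qed.

Lemma projB u x y : proj u (x - y) = proj u x - proj u y.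
Proof. by rewrite projD projN. Qed.

Lemma proj0 u : proj u 0 = 0.
Proof. by rewrite /proj dotp0r mul0r scale0r subr0. Qed.

Lemma proj_self u : u != 0 -> proj u u = 0.
Proof.
by move=> u0; rewrite /proj divff ?scale1r ?subrr // gt_eqF // dotpp_gt0.
Qed.

Lemma dotp_proj u x : u != 0 -> dotp u (proj u x) = 0.
Proof.
move=> u0; have h := dotpp_gt0 _ u0.
rewrite /proj dotpBr dotpZr; field; by rewrite gt_eqF.
Qed.

Lemma proj_proj u x : u != 0 -> proj u (proj u x) = proj u x.
Proof. by move=> u0; rewrite {1}/proj dotp_proj // mul0r scale0r subr0. Qed.

Lemma proj_opp u x : proj (- u) x = proj u x.
Proof.
by rewrite /proj dotpNl dotpNr dotpNl opprK scalerN -scaleNr mulNr opprK.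
Qed.

Lemma nrm_proj_le u x : u != 0 -> nrm (proj u x) <= nrm x.
Proof.
move=> u0; have h := dotpp_gt0 _ u0.
have e : nrm (proj u x) ^+ 2 = nrm x ^+ 2 - dotp u x ^+ 2 / dotp u u.
  rewrite !nrm_sq /proj !(dotpBl, dotpBr, dotpZl, dotpZr) (dotpC x u).
  by field; by rewrite gt_eqF.
have : nrm (proj u x) ^+ 2 <= nrm x ^+ 2.
  rewrite e lerBlDr lerDl; apply: divr_ge0 => //; [exact: sqr_ge0 | exact: ltW].
have := nrm_ge0 (proj u x); have := nrm_ge0 x; nra.
Qed.

Lemma proj_eq0 u k : proj u k = 0 -> k = (dotp u k / dotp u u) *: u.
Proof. by move/eqP; rewrite subr_eq0 => /eqP. Qed.

End Proj.

Section G.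
Context {R : realType} {n : nat}.
Notation V := 'rV[R]_n.
Implicit Types u v w x y z : V.

Definition span (s : seq V) : set V :=
  [set w | exists lam : nat -> R, w = \sum_(i < size s) lam i *: s`_i].

Definition subspace (L : set V) :=
  [/\ L 0, forall x y, L x -> L y -> L (x + y) & forall a x, L x -> L (a *: x)].

Definition cone (K : set V) :=
  (forall x y, K x -> K y -> K (x + y)) /\ (forall t x, 0 < t -> K x -> K (t *: x)).

Lemma span_subspace s : subspace (span s).
Proof.
split.
- by exists (fun=> 0); rewrite big1 // => i _; rewrite scale0r.
- move=> x y [l1 ->] [l2 ->]; exists (fun i => l1 i + l2 i).
  by rewrite -big_split; apply: eq_bigr => i _; rewrite scalerDl.
- move=> a x [l ->]; exists (fun i => a * l i).
  by rewrite scaler_sumr; apply: eq_bigr => i _; rewrite scalerA.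
Qed.

Lemma span_nil w : span [::] w -> w = 0.
Proof. by case=> l ->; rewrite big_ord0. Qed.

Lemma span_cons v s w : span (v :: s) w <-> exists a w', span s w' /\ w = a *: v + w'.
Proof.
split.
  case=> l ->; rewrite /= big_ord_recl /=; exists (l 0%N), (\sum_(i < size s) l i.+1 *: s`_i).
  by split => //; exists (fun i => l i.+1).
case=> a [w' [[l ->] ->]]; exists (fun i => if i is j.+1 then l j else a).
by rewrite /= big_ord_recl.
Qed.

Lemma span_mem s i : (i < size s)%N -> span s s`_i.
Proof.
move=> hi; exists (fun j => (j == i)%:R).
rewrite (bigD1 (Ordinal hi)) //= eqxx scale1r big1 ?addr0 // => j hj.
have -> : (nat_of_ord j == i) = false.
  by apply/negbTE; apply: contra hj => /eqP h; apply/eqP/val_inj.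
by rewrite scale0r.
Qed.

Lemma span_proj u s w : span s w -> span (map (proj u) s) (proj u w).
Proof.
case=> l ->; exists l; rewrite size_map.
rewrite (big_morph (proj u) (@projD _ _ u) (proj0 u)).
apply: eq_bigr => i _; rewrite projZ (nth_map 0) //.
Qed.

Lemma span_neg s w : span s w -> span s (- w).
Proof. by case: (span_subspace s) => _ _ h /(h (-1)); rewrite scaleN1r. Qed.

Lemma lemG (s : seq V) : forall (L K : set V), subspace L -> L `<=` span s ->
  cone K -> K `<=` L -> L `<=` closure_e K -> K 0.
Proof.
move: {2}(size s) (erefl (size s)) => m; elim: m s => [|m IHm] [|v s] hs L K [L0 LD LZ] Ls [KD KZ] KL LK; try discriminate.
  have [k Kk _] := LK 0 L0 1 ltr01.
  by have := span_nil _ (Ls _ (KL _ Kk)) => k0; rewrite -k0.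
have [Ls'|] := pselect (L `<=` span s).
  apply: (IHm s _ L K) => //; first by case: hs.
move=> /existsNP [u0 /not_implyP [Lu0 nsu0]].
have sub : forall u, L u -> ~ span s u ->
    exists k, [/\ K k, dotp u k < 0 & proj u k = 0].
  move=> u Lu nsu.
  have unz : u != 0.
    apply/eqP => hu; apply: nsu; rewrite hu.
    by case: (span_subspace s).
  have uu := dotpp_gt0 _ unz.
  pose L' := [set x | exists w, L w /\ x = proj u w].
  pose Q := [set x | exists k, [/\ K k, dotp u k < 0 & x = proj u k]].
  suff : Q 0 by case=> k [Kk hk ->]; exists k.
  apply: (IHm (map (proj u) s) _ L' Q); first by rewrite size_map; case: hs.
  - split.
    + by exists 0; split => //; rewrite proj0.
    + by move=> _ _ [w1 [L1 ->]] [w2 [L2 ->]]; exists (w1 + w2); rewrite projD; split; auto.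
    + by move=> a _ [w [Lw ->]]; exists (a *: w); rewrite projZ; split; auto.
  - move=> _ [w [Lw ->]].
    have [a [w' [sw' ->]]] := (span_cons v s w).1 (Ls _ Lw).
    have [b [u' [su' eu]]] := (span_cons v s u).1 (Ls _ Lu).
    have b0 : b != 0.
      by apply/eqP => b0; apply: nsu; rewrite eu b0 scale0r add0r.
    have pv : proj u v = (- b^-1) *: proj u u'.
      have : proj u (b *: v + u') = 0 by rewrite -eu proj_self.
      rewrite projD projZ => /eqP; rewrite addr_eq0 => /eqP h.
      by rewrite scaleNr -scalerN -h scalerA mulVf // scale1r.
    rewrite projD projZ pv scalerA.
    case: (span_subspace (map (proj u) s)) => _ SD SZ.
    by apply: SD; [apply: SZ; exact: span_proj | exact: span_proj].
  - split.
    + move=> _ _ [k1 [K1 h1 ->]] [k2 [K2 h2 ->]]; exists (k1 + k2).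
      by rewrite projD dotpDr; split => //; [exact: KD | lra].
    + move=> t _ tp [k [Kk hk ->]]; exists (t *: k).
      rewrite projZ dotpZr; split => //; first exact: KZ.
      by rewrite pmulr_rlt0.
  - by move=> _ [k [Kk _ ->]]; exists k; split => //; exact: KL.
  - move=> _ [w [Lw ->]]; apply/closureP => rho rho0.
    pose p := proj u w - u.
    have Lp : L p.
      rewrite /p /proj -!scaleN1r.
      by repeat (apply: (LD) || apply: (LZ) || done).
    have hpK := LK _ Lp.
    pose del := dotp u u / (1 + nrm u).
    have nu := nrm_ge0 u.
    have del0 : 0 < del by apply: divr_gt0 => //; lra.
    have hdel : del * (1 + nrm u) = dotp u u by rewrite /del divfK // gt_eqF //; lra.
    have eta0 : 0 < Order.min rho del by rewrite lt_min rho0 del0.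
    have [k Kk hk] := (closureP _ _).1 hpK _ eta0.
    move: hk; rewrite lt_min => /andP[hk1 hk2].
    exists (proj u k).
      exists k; split => //.
      have e1 : dotp u k = dotp u p - dotp u (p - k) by rewrite dotpBr; ring.
      have e2 : dotp u p = - dotp u u by rewrite /p dotpBr dotp_proj // sub0r.
      have h3 := dotp_abs u (p - k).
      have h4 : nrm u * nrm (p - k) <= nrm u * del by apply: ler_wpM2l => //; exact: ltW.
      move: h3; rewrite ler_norml => /andP[h5 _].
      rewrite e1 e2. nra.
    have -> : proj u w - proj u k = proj u (p - k).
      by rewrite projB /p projB proj_proj // proj_self // subr0.
    exact: le_lt_trans (nrm_proj_le u (p - k) unz) hk1.
have [k1 [K1 h1 p1]] := sub u0 Lu0 nsu0.
have Lmu : L (- u0) by rewrite -scaleN1r; apply: LZ.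
have nsmu : ~ span s (- u0).
  by move=> h; apply: nsu0; rewrite -[u0]opprK; apply: span_neg.
have [k2 [K2 h2 p2]] := sub _ Lmu nsmu.
rewrite proj_opp in p2; rewrite dotpNl oppr_lt0 in h2.
have e1 := proj_eq0 _ _ p1; have e2 := proj_eq0 _ _ p2.
set a1 := dotp u0 k1 in h1 e1; set a2 := dotp u0 k2 in h2 e2.
have Kc : K (a2 *: k1 + (- a1) *: k2).
  by apply: KD; apply: KZ => //; rewrite oppr_gt0.
suff <- : a2 *: k1 + (- a1) *: k2 = 0 by [].
rewrite e1 e2 !scalerA -scalerDl.
have -> : a2 * (a1 / dotp u0 u0) + - a1 * (a2 / dotp u0 u0) = 0 by ring.
by rewrite scale0r.
Qed.

End G.

Section F.
Context {R : realType} {n : nat}.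
Notation V := 'rV[R]_n.
Implicit Types u v w x y z : V.

Lemma aff_mem (D : set V) x : D x -> aff D x.
Proof.
move=> Dx; exists 1%N, (fun=> x), (fun=> 1).
by split => //; split; rewrite big_ord1 ?scale1r.
Qed.

Lemma aff_comb2 (D : set V) p q (l : R) :
  aff D p -> aff D q -> aff D (l *: p + (1 - l) *: q).
Proof.
move=> [k1 [p1 [w1 [Dp1 [sw1 ->]]]]] [k2 [p2 [w2 [Dp2 [sw2 ->]]]]].
pose P (i : 'I_(k1 + k2)) := match split i with inl j => p1 j | inr j => p2 j end.
pose W (i : 'I_(k1 + k2)) := match split i with inl j => l * w1 j | inr j => (1 - l) * w2 j end.
have hl : forall j : 'I_k1, split (lshift k2 j) = inl j := fun j => unsplitK (inl j).
have hr : forall j : 'I_k2, split (rshift k1 j) = inr j := fun j => unsplitK (inr j).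
exists (k1 + k2)%N, P, W; split.
  by move=> i; rewrite /P; case: (split i).
split.
  rewrite big_split_ord /W.
  under eq_bigr do rewrite hl.
  under [X in _ + X = _]eq_bigr do rewrite hr.
  by rewrite -!mulr_sumr sw1 sw2 !mulr1 addrC subrK.
rewrite big_split_ord /W /P.
under eq_bigr do rewrite hl.
under [X in _ = _ + X]eq_bigr do rewrite hr.
rewrite !scaler_sumr; congr (_ + _); apply: eq_bigr => i _; by rewrite scalerA.
Qed.

Definition sB : seq V := map (fun j => delta_mx 0 j) (enum 'I_n).

Lemma span_in s x : x \in s -> span s x.
Proof. by move=> xs; rewrite -(nth_index 0 xs); apply: span_mem; rewrite index_mem. Qed.

Lemma span_all w : span sB w.
Proof.
rewrite (row_sum_delta w); case: (span_subspace sB) => S0 SD SZ.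
apply: (big_ind (span sB)) => // j _; apply: SZ; apply: span_in.
by apply: map_f; rewrite mem_enum.
Qed.

Lemma relball_in (Om E : set V) x0 d : convex_set E -> E `<=` Om -> Om `<=` closure_e E ->
  0 < d -> ball_e x0 d `&` aff Om `<=` Om ->
  forall y, aff Om y -> nrm (y - x0) < d / 2 -> E y.
Proof.
move=> cE EO OE d0 hball y Ay hy.
pose L := [set w | aff Om (y + w)].
pose K := [set z | exists t e, [/\ 0 < t, E e & z = t *: (e - y)]].
have Lsub : subspace L.
  split.
  - by rewrite /L /= addr0.
  - move=> w1 w2 h1 h2; rewrite /L /=.
    have hm := aff_comb2 _ _ _ (2^-1) h1 h2.
    have := aff_comb2 _ _ _ 2 hm Ay.
    congr (aff Om _).
    rewrite !scalerDr !scalerA mulrBr mulr1 divff ?pnatr_eq0 //.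
    rewrite (_ : 1 - 2 = - 1 :> R); last by ring.
    rewrite (_ : 2 - 1 = 1 :> R); last by ring.
    by rewrite !scale1r scaleN1r addrACA addrAC addrK.
  - move=> a w h; rewrite /L /=.
    have := aff_comb2 _ _ _ a h Ay; congr (aff Om _).
    by apply/rowP => j; rewrite !mxE; ring.
have Kcone : cone K.
  split.
  - move=> _ _ [t1 [e1 [t10 E1 ->]]] [t2 [e2 [t20 E2 ->]]].
    have t0 : 0 < t1 + t2 by lra.
    exists (t1 + t2), ((t1 / (t1 + t2)) *: e1 + (1 - t1 / (t1 + t2)) *: e2); split => //.
      apply: cE => //; apply/andP; split.
        by apply: divr_ge0; lra.
      by rewrite ler_pdivrMr // mul1r; lra.
    have h1 : 1 - t1 / (t1 + t2) = t2 / (t1 + t2) by field; rewrite gt_eqF.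
    rewrite h1; apply/rowP => j; rewrite !mxE.
    by field; rewrite gt_eqF.
  - move=> t _ t0 [s [e [s0 Ee ->]]]; exists (t * s), e; split => //.
      exact: mulr_gt0.
    by rewrite scalerA.
have KL : K `<=` L.
  move=> _ [t [e [t0 Ee ->]]]; rewrite /L /=.
  have := aff_comb2 _ _ _ t (aff_mem _ _ (EO _ Ee)) Ay; congr (aff Om _).
  by apply/rowP => j; rewrite !mxE; ring.
have LK : L `<=` closure_e K.
  move=> w Lw; apply/closureP => rho rho0.
  have nw := nrm_ge0 w.
  pose s := d / (2 * (1 + nrm w)).
  have s0 : 0 < s by apply: divr_gt0 => //; lra.
  have hs : s * nrm w < d / 2.
    have e : s * (2 * (1 + nrm w)) = d by rewrite /s divfK // mulf_neq0 ?pnatr_eq0 // gt_eqF //; lra.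
    nra.
  have Lsw : L (s *: w) by case: Lsub => _ _; apply.
  have Oq : Om (y + s *: w).
    apply: hball; split => //; apply/ballP; split => //.
    have := nrmD (y - x0) (s *: w); rewrite nrmZ gtr0_norm //.
    rewrite addrAC; lra.
  have [e Ee he] := (closureP _ _).1 (OE _ Oq) (s * rho) (mulr_gt0 s0 rho0).
  exists (s^-1 *: (e - y)).
    by exists s^-1, e; split => //; rewrite invr_gt0.
  have -> : w - s^-1 *: (e - y) = s^-1 *: (y + s *: w - e).
    by apply/rowP => j; rewrite !mxE; field; rewrite gt_eqF.
  rewrite nrmZ gtr0_norm ?invr_gt0 // mulrC ltr_pdivrMr //; lra.
have [t [e [t0 Ee e0]]] := lemG sB L K Lsub (fun w _ => span_all w) Kcone KL LK.
move: e0 => /esym /eqP; rewrite scaler_eq0 gt_eqF //= subr_eq0 => /eqP <-.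
exact: Ee.
Qed.

End F.

Theorem mainTheorem5 (R : realType) (n : nat) (Om1 Om2 : set 'rV[R]_n) (eps : R) :
  nearly_convex Om1 -> nearly_convex Om2 -> 0 <= eps ->
  ri Om1 `&` ri Om2 !=set0 ->
  forall xbar, (Om1 `&` Om2) xbar ->
    eps_normal eps xbar (Om1 `&` Om2) =
    [set xi | exists e1 e2 : R, [/\ 0 <= e1, 0 <= e2, e1 + e2 = eps &
        msum (eps_normal e1 xbar Om1) (eps_normal e2 xbar Om2) xi]].
Proof.
move=> [E1 [cE1 [E1O O1E]]] [E2 [cE2 [E2O O2E]]] eps0.
move=> [x0 [[O1x0 [d1 [d10 hb1]]] [O2x0 [d2 [d20 hb2]]]]] xbar [O1xb O2xb].
apply/seteqP; split; last first.
  move=> xi [e1 [e2 [e10 e20 he [a [b [Na [Nb ->]]]]]]] x [O1x O2x].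
  by rewrite dotpDl; have := Na x O1x; have := Nb x O2x; lra.
move=> xi hxi.
pose r := Order.min d1 d2.
have r0 : 0 < r by rewrite lt_min d10 d20.
have hE1 : forall y, aff Om1 y -> nrm (y - x0) < r / 2 -> E1 y.
  move=> y Ay hy; apply: (relball_in Om1 E1 x0 d1) => //.
  by apply: lt_le_trans hy _; rewrite ler_pM2r ?invr_gt0 ?ltr0n // /r ge_min lexx.
have hE2 : forall y, aff Om2 y -> nrm (y - x0) < r / 2 -> E2 y.
  move=> y Ay hy; apply: (relball_in Om2 E2 x0 d2) => //.
  by apply: lt_le_trans hy _; rewrite ler_pM2r ?invr_gt0 ?ltr0n // /r ge_min lexx orbT.
pose M z rr := exists t x y, [/\ 0 < t, E1 x, E2 y, z = t *: (x - y) &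
                                 t * (eps - dotp xi (y - xbar)) <= rr].
have hM1 : forall z1 r1 z2 r2, M z1 r1 -> M z2 r2 -> M (z1 + z2) (r1 + r2).
  move=> _ r1 _ r2 [t1 [x1 [y1 [t10 Ex1 Ey1 -> h1]]]] [t2 [x2 [y2 [t20 Ex2 Ey2 -> h2]]]].
  have t0 : 0 < t1 + t2 by lra.
  have l01 : 0 <= t1 / (t1 + t2) <= 1.
    by apply/andP; split; [apply: divr_ge0; lra | rewrite ler_pdivrMr // mul1r; lra].
  exists (t1 + t2), ((t1 / (t1 + t2)) *: x1 + (1 - t1 / (t1 + t2)) *: x2),
    ((t1 / (t1 + t2)) *: y1 + (1 - t1 / (t1 + t2)) *: y2); split => //.
  - exact: cE1.
  - exact: cE2.
  - by apply/rowP => j; rewrite !mxE; field; rewrite gt_eqF.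
  - rewrite dotpBr dotpDr !dotpZr.
    rewrite dotpBr in h1; rewrite dotpBr in h2.
    set A1 := dotp xi y1 in h1 *; set A2 := dotp xi y2 in h2 *; set B := dotp xi xbar in h1 h2 *.
    have -> : (t1 + t2) * (eps - (t1 / (t1 + t2) * A1 + (1 - t1 / (t1 + t2)) * A2 - B))
      = t1 * (eps - (A1 - B)) + t2 * (eps - (A2 - B)).
      by field; rewrite gt_eqF.
    lra.
have hM2 : forall t z rr, 0 < t -> M z rr -> M (t *: z) (t * rr).
  move=> t _ rr t0 [s [x [y [s0 Ex Ey -> h]]]].
  exists (t * s), x, y; split => //; first exact: mulr_gt0.
    by rewrite scalerA.
  by rewrite -mulrA ler_pM2l.
have hM3 : forall rr, M 0 rr -> 0 <= rr.
  move=> rr [t [x [y [t0 Ex Ey e h]]]].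
  move: e => /esym /eqP; rewrite scaler_eq0 gt_eqF //= subr_eq0 => /eqP exy.
  subst y.
  have := hxi x (conj (E1O _ Ex) (E2O _ Ey)).
  have : 0 <= t * (eps - dotp xi (x - xbar)) -> 0 <= rr by move=> ?; lra.
  by move=> hh hx; apply: hh; apply: mulr_ge0; lra.
have hM4 : forall z rr, M z rr -> exists s r', 0 < s /\ M (- (s *: z)) r'.
  move=> _ rr [t [x [y [t0 Ex Ey -> h]]]].
  have n1 := nrm_ge0 (x0 - x); have n2 := nrm_ge0 (x0 - y).
  pose sg := (r / 2) / (1 + nrm (x0 - x) + nrm (x0 - y)).
  have sg0 : 0 < sg by apply: divr_gt0; lra.
  have hsg : sg * (1 + nrm (x0 - x) + nrm (x0 - y)) = r / 2.
    by rewrite /sg divfK // gt_eqF //; lra.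
  pose x' := x0 + sg *: (x0 - x); pose y' := x0 + sg *: (x0 - y).
  have Ex' : E1 x'.
    apply: hE1.
      have := aff_comb2 _ _ _ (1 + sg) (aff_mem _ _ O1x0) (aff_mem _ _ (E1O _ Ex)).
      by congr (aff Om1 _); apply/rowP => j; rewrite !mxE; ring.
    rewrite /x' addrC addKr nrmZ gtr0_norm //; nra.
  have Ey' : E2 y'.
    apply: hE2.
      have := aff_comb2 _ _ _ (1 + sg) (aff_mem _ _ O2x0) (aff_mem _ _ (E2O _ Ey)).
      by congr (aff Om2 _); apply/rowP => j; rewrite !mxE; ring.
    rewrite /y' addrC addKr nrmZ gtr0_norm //; nra.
  exists (sg / t), (1 * (eps - dotp xi (y' - xbar))); split.
    exact: divr_gt0.
  exists 1, x', y'; split => //.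
  by apply/rowP => j; rewrite !mxE; field; rewrite gt_eqF.
have [a ha] := HB_cone M hM1 hM2 hM3 hM4.
have mainE : forall x y, E1 x -> E2 y -> dotp a (x - y) <= eps - dotp xi (y - xbar).
  move=> x y Ex Ey; apply: ha; exists 1, x, y; split => //; first by rewrite scale1r.
  by rewrite mul1r.
have step1 : forall x y, Om1 x -> E2 y ->
    dotp a x <= eps - dotp xi (y - xbar) + dotp a y.
  move=> x y O1x Ey; apply: (closure_le E1) (O1E _ O1x) => e Ee.
  by have := mainE e y Ee Ey; rewrite dotpBr; lra.
have step2 : forall x y, Om1 x -> Om2 y ->
    dotp (xi - a) y <= eps + dotp xi xbar - dotp a x.
  move=> x y O1x O2y; apply: (closure_le E2) (O2E _ O2y) => e Ee.
  by have := step1 x e O1x Ee; rewrite dotpBr dotpBl; lra.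
have main' : forall x y, Om1 x -> Om2 y ->
    dotp a (x - xbar) + dotp (xi - a) (y - xbar) <= eps.
  move=> x y O1x O2y; have := step2 x y O1x O2y.
  by rewrite !dotpBr !dotpBl; lra.
pose S := [set v | exists x, Om1 x /\ v = dotp a (x - xbar)].
have S0 : S 0 by exists xbar; rewrite subrr dotp0r.
have Sub : forall v, S v -> v <= eps.
  move=> _ [x [O1x ->]]; have := main' x xbar O1x O2xb.
  by rewrite subrr dotp0r addr0.
have hS : has_ubound S by exists eps.
pose e1 := sup S.
have e1ge : 0 <= e1 by exact: ub_le_sup hS _ S0.
have e1le : e1 <= eps by apply: ge_sup; [exists 0 | exact: Sub].
exists e1, (eps - e1); split => //.
- by rewrite subr_ge0.
- by rewrite addrC subrK.
exists a, (xi - a); split; [|split].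
- move=> x O1x; apply: ub_le_sup hS _ _; by exists x.
- move=> y O2y.
  have : e1 <= eps - dotp (xi - a) (y - xbar).
    apply: ge_sup; first by exists 0.
    move=> _ [x [O1x ->]]; have := main' x y O1x O2y; lra.
  lra.
- by rewrite addrC subrK.
Qed.
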